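(* Let $(G,\preceq)$ be a cc sponge group. Let $C\subseteq G$ be invariant under conjugation, with $\mathbf{1}\in C$ and $\mathbf{1}\preceq c$ for all $c\in C$, and assume that for all $x,y\in G$: if $y\in C$, $\mathbf{1}\preceq x$ and $x\preceq y$, then $x\in C$ and $x^{-1}\cdot y\in C$. Define the relation $\sqsubseteq$ on $G$ by $x\sqsubseteq y\iff x^{-1}\cdot y\in C$. Then $(G,\sqsubseteq)$ is a cc sponge group.
   Context: An orientation is a reflexive, antisymmetric binary relation. An oriented group is a group $G$ (operation $\cdot$, neutral element $\mathbf{1}$) with an orientation $\preceq$ such that $x\preceq y$ implies $x\cdot z\preceq y\cdot z$ and $z\cdot x\preceq z\cdot y$ for all $x,y,z$. A subset $P$ is right-bounded if some $s$ has $p\preceq s$ for all $p\in P$; the join of $P$ is an $x$ with $p\preceq x$ for all $p\in P$ and $x\preceq y$ whenever $p\preceq y$ for all $p\in P$. An oriented set is a cc sponge if every nonempty right-bounded subset has a join. A cc sponge group is an oriented group that is a cc sponge. *)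

(* Defs.v *)
Set Implicit Arguments.

Definition is_group (T : Type) (mul : T -> T -> T) (one : T) (inv : T -> T) : Prop :=
  (forall x y z, mul x (mul y z) = mul (mul x y) z) /\
  (forall x, mul one x = x) /\ (forall x, mul x one = x) /\
  (forall x, mul (inv x) x = one) /\ (forall x, mul x (inv x) = one).

Definition orientation (T : Type) (le : T -> T -> Prop) : Prop :=
  (forall x, le x x) /\ (forall x y, le x y -> le y x -> x = y).

Definition oriented_group (T : Type) (mul : T -> T -> T) (one : T) (inv : T -> T)
  (le : T -> T -> Prop) : Prop :=
  is_group mul one inv /\ orientation le /\
  (forall x y z, le x y -> le (mul x z) (mul y z) /\ le (mul z x) (mul z y)).

Definition right_bounded (T : Type) (le : T -> T -> Prop) (P : T -> Prop) : Prop :=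
  exists s, forall p, P p -> le p s.

Definition is_join (T : Type) (le : T -> T -> Prop) (P : T -> Prop) (x : T) : Prop :=
  (forall p, P p -> le p x) /\
  (forall y, (forall p, P p -> le p y) -> le x y).

Definition cc_sponge (T : Type) (le : T -> T -> Prop) : Prop :=
  orientation le /\
  forall P : T -> Prop, (exists p, P p) -> right_bounded le P -> exists x, is_join le P x.

Definition cc_sponge_group (T : Type) (mul : T -> T -> T) (one : T) (inv : T -> T)
  (le : T -> T -> Prop) : Prop :=
  oriented_group mul one inv le /\ cc_sponge le.

(* Main.v *)
Require Import Defs.

Theorem mainTheorem10 (T : Type) (mul : T -> T -> T) (one : T) (inv : T -> T)
  (le : T -> T -> Prop) (C : T -> Prop) :
  cc_sponge_group mul one inv le ->
  (forall g c, C c -> C (mul (mul g c) (inv g))) ->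
  C one ->
  (forall c, C c -> le one c) ->
  (forall x y, C y -> le one x -> le x y -> C x /\ C (mul (inv x) y)) ->
  cc_sponge_group mul one inv (fun x y => C (mul (inv x) y)).
Proof.
  intros [[Hg [[Hrefl Hanti] Hcomp]] [_ Hsp]] Hconj H1 Hpos Hconv.
  destruct Hg as [Ha [Hl [Hr [Hil Hir]]]].
  assert (Huniq : forall a b, mul a b = one -> b = inv a).
  { intros a b E. rewrite <- (Hl b), <- (Hil a), <- Ha, E, Hr. reflexivity. }
  assert (Hinvinv : forall a, inv (inv a) = a).
  { intros a. symmetry. apply Huniq. apply Hil. }
  assert (Hinvmul : forall a b, inv (mul a b) = mul (inv b) (inv a)).
  { intros a b. symmetry. apply Huniq.
    rewrite Ha, <- (Ha a b), Hir, Hr, Hir. reflexivity. }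
  assert (Hcanc : forall a b, mul (inv a) (mul a b) = b).
  { intros a b. rewrite Ha, Hil, Hl. reflexivity. }
  assert (Hcanc2 : forall a b, mul a (mul (inv a) b) = b).
  { intros a b. rewrite Ha, Hir, Hl. reflexivity. }
  assert (Hsub : forall x y, C (mul (inv x) y) -> le x y).
  { intros x y Hc. pose proof (proj2 (Hcomp _ _ x (Hpos _ Hc))) as H.
    rewrite Hr, Hcanc2 in H. exact H. }
  assert (Hle1 : forall x y, le x y -> le one (mul (inv x) y)).
  { intros x y H. pose proof (proj2 (Hcomp _ _ (inv x) H)) as H'.
    rewrite Hil in H'. exact H'. }
  assert (Hint : forall x y z, C (mul (inv x) z) -> le x y -> le y z ->
            C (mul (inv x) y) /\ C (mul (inv y) z)).
  { intros x y z Hc Hxy Hyz.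
    assert (Hm : le (mul (inv x) y) (mul (inv x) z)) by apply (proj2 (Hcomp _ _ _ Hyz)).
    destruct (Hconv _ _ Hc (Hle1 _ _ Hxy) Hm) as [A B].
    split; [exact A|]. rewrite Hinvmul, Hinvinv, <- Ha, Hcanc2 in B. exact B. }
  split; [split; [|split]|].
  - repeat split; assumption.
  - split.
    + intros x. rewrite Hil. exact H1.
    + intros x y Hxy Hyx.
      set (a := mul (inv x) y) in *.
      assert (E : mul (inv y) x = inv a).
      { unfold a. rewrite Hinvmul, Hinvinv. reflexivity. }
      rewrite E in Hyx.
      pose proof (Hpos _ Hxy) as P1. pose proof (Hpos _ Hyx) as P2.
      pose proof (proj1 (Hcomp _ _ a P2)) as P3. rewrite Hl, Hil in P3.
      assert (Ea : a = one) by (apply Hanti; assumption).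
      unfold a in Ea. rewrite <- (Hcanc2 x y), Ea, Hr. reflexivity.
  - intros x y z Hxy. split.
    + pose proof (Hconj (inv z) _ Hxy) as H. rewrite Hinvinv in H.
      replace (mul (inv (mul x z)) (mul y z)) with (mul (mul (inv z) (mul (inv x) y)) z).
      exact H. rewrite Hinvmul, !Ha. reflexivity.
    + rewrite Hinvmul, <- Ha, Hcanc. exact Hxy.
  - split.
    + split.
      * intros x. rewrite Hil. exact H1.
      *
        intros x y Hxy Hyx.
        set (a := mul (inv x) y) in *.
        assert (E : mul (inv y) x = inv a).
        { unfold a. rewrite Hinvmul, Hinvinv. reflexivity. }
        rewrite E in Hyx.
        pose proof (Hpos _ Hxy) as P1. pose proof (Hpos _ Hyx) as P2.
        pose proof (proj1 (Hcomp _ _ a P2)) as P3. rewrite Hl, Hil in P3.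
        assert (Ea : a = one) by (apply Hanti; assumption).
        unfold a in Ea. rewrite <- (Hcanc2 x y), Ea, Hr. reflexivity.
    + intros P [p0 Hp0] [s Hs].
      destruct (Hsp P (ex_intro _ p0 Hp0)) as [j [Hj1 Hj2]].
      { exists s. intros p Hp. apply Hsub, Hs, Hp. }
      assert (Hjs : le j s) by (apply Hj2; intros p Hp; apply Hsub, Hs, Hp).
      exists j. split.
      * intros p Hp. exact (proj1 (Hint p j s (Hs p Hp) (Hj1 p Hp) Hjs)).
      * intros y Hy.
        assert (Hjy : le j y) by (apply Hj2; intros p Hp; apply Hsub, Hy, Hp).
        exact (proj2 (Hint p0 j y (Hy p0 Hp0) (Hj1 p0 Hp0) Hjy)).
Qed.
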